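(* Let $r\ge1$, $t,s\ge0$ be integers and $\mathbf{u}=(u_1,\dots,u_r)\in\mathbb{Z}_+^r$. Let $\mathbf{u}+s=(u_1+s,\dots,u_r+s)$. Then $|\mathcal{A}_{t,s}(\mathbf{u})|\le|\mathcal{A}_{t,s}(\mathbf{u}+s)|$.
   Context: For $\mathbf{u}\in\mathbb{Z}_+^r$ (positive integers), $\mathcal{A}_{t,s}(\mathbf{u})=\{\mathbf{v}\in\mathbb{Z}_+^r:\ \sum_{i=1}^r\max\{0,u_i-v_i\}\le s,\ \sum_{i=1}^r\max\{0,v_i-u_i\}\le t\}$. *)

(* Defs.v *)
From mathcomp Require Import all_boot all_order.
From mathcomp Require Import boolp classical_sets cardinality.
Set Implicit Arguments. Unset Strict Implicit. Unset Printing Implicit Defensive.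

(* Vectors in Z_+^r are r-tuples of nat with all entries >= 1.
   max{0, a - b} on integers is truncated subtraction a - b on nat. *)
Definition pos_vec (r : nat) (v : r.-tuple nat) : Prop :=
  forall i : 'I_r, 0 < tnth v i.

Definition Aset (r t s : nat) (u : r.-tuple nat) : set (r.-tuple nat) :=
  [set v | pos_vec v /\
           (\sum_(i < r) (tnth u i - tnth v i) <= s) /\
           (\sum_(i < r) (tnth v i - tnth u i) <= t)].

Definition shift_vec (r s : nat) (u : r.-tuple nat) : r.-tuple nat :=
  [tuple tnth u i + s | i < r].

(* Main.v *)
Require Import Defs.
From mathcomp Require Import all_boot all_order.
From mathcomp Require Import boolp classical_sets cardinality.
From mathcomp Require Import functions.
Local Open Scope card_scope.

Lemma tnth_shift (r s : nat) (u : r.-tuple nat) i :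
  tnth (shift_vec s u) i = tnth u i + s.
Proof. by rewrite /shift_vec tnth_mktuple. Qed.

Theorem lemma1 (r t s : nat) (u : r.-tuple nat) :
  1 <= r -> pos_vec u ->
  Aset t s u #<= Aset t s (shift_vec s u).
Proof.
move=> _ _.
have H : $|{injfun Aset t s u >-> Aset t s (shift_vec s u)}|.
  apply/injfunPex; exists (fun v => shift_vec s v).
  - move=> v [pv [h1 h2]]; split; last split.
    + by move=> i; rewrite tnth_shift addn_gt0 pv.
    + by under eq_bigr => i _ do rewrite !tnth_shift subnDr.
    + by under eq_bigr => i _ do rewrite !tnth_shift subnDr.
  - move=> v w _ _ e; apply: eq_from_tnth => i.
    have := congr1 (fun x => tnth x i) e => /=.
    by rewrite !tnth_shift => /addIn.
case: H => g; exact: inj_card_le g.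
Qed.
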